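(* (a) If $f:A\to B$ is an equivalence of types, then for all $x:A$ the differential $df_x:\mathbb{D}_x\to\mathbb{D}_{f(x)}$ is an equivalence. (b) Let $A$ be a type and $x,y:A$. For any equality $\gamma:x=y$ there is an equivalence $\mathbb{D}_x\simeq\mathbb{D}_y$.
   Context: Work in homotopy type theory (function extensionality, univalent universe $\mathcal{U}$) with a postulated modality: a map $\Im:\mathcal{U}\to\mathcal{U}$ and maps $\iota_A:A\to\Im A$ for every type $A$, such that for every $B:\Im A\to\mathcal{U}$ precomposition with $\iota_A$, $\left(\prod_{a:\Im A}\Im B(a)\right)\to\left(\prod_{a:A}\Im B(\iota_A(a))\right)$, is an equivalence. For $f:A\to B$, $\Im f:\Im A\to\Im B$ is the map obtained from this elimination property, with identifications $\eta_f(a):\Im f(\iota_A(a))=\iota_B(f(a))$. The formal disk at $a:A$ is $\mathbb{D}_a:=\sum_{x:A}(\iota_A(x)=\iota_A(a))$. The differential of $f$ at $a$ is $df_a:\mathbb{D}_a\to\mathbb{D}_{f(a)}$, $(x,\varepsilon)\mapsto (f(x),\ \eta_f(x)^{-1}\cdot \mathrm{ap}_{\Im f}(\varepsilon)\cdot\eta_f(a))$. *)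

(* Defs.v *)
Inductive paths {A : Type} (a : A) : A -> Type :=
  idpath : paths a a.
Arguments idpath {A a}, [A] a.

Notation "x == y" := (paths x y) (at level 70, no associativity) : type_scope.

Definition inv {A : Type} {x y : A} (p : x == y) : y == x :=
  match p with idpath => idpath end.

Definition concat {A : Type} {x y z : A} (p : x == y) (q : y == z) : x == z :=
  match q with idpath => p end.

Definition ap {A B : Type} (f : A -> B) {x y : A} (p : x == y) : f x == f y :=
  match p with idpath => idpath end.

Definition happly {A : Type} {B : A -> Type} {f g : forall a, B a}
  (p : f == g) : forall a, f a == g a :=
  fun a => match p with idpath => idpath end.

Record IsEquiv {A B : Type} (f : A -> B) : Type := {
  eq_sec : B -> A;
  eq_sec_h : forall b, f (eq_sec b) == b;
  eq_ret : B -> A;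
  eq_ret_h : forall a, eq_ret (f a) == a }.

Definition Funext : Type :=
  forall (A : Type) (B : A -> Type) (f g : forall a, B a), IsEquiv (@happly A B f g).

Definition Equiv (A B : Type) : Type := { e : A -> B & IsEquiv e }.

Definition precomp (Im : Type -> Type) (iota : forall A : Type, A -> Im A)
  (A : Type) (B : Im A -> Type) :
  (forall a : Im A, Im (B a)) -> (forall a : A, Im (B (iota A a))) :=
  fun h a => h (iota A a).
Arguments precomp : clear implicits.

Definition ModalElim (Im : Type -> Type) (iota : forall A : Type, A -> Im A) : Type :=
  forall (A : Type) (B : Im A -> Type), IsEquiv (precomp Im iota A B).

Section Modality.
Variables (Im : Type -> Type) (iota : forall A : Type, A -> Im A)
  (elim : ModalElim Im iota).

Definition Imf {A B : Type} (f : A -> B) : Im A -> Im B :=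
  eq_sec _ (elim A (fun _ => B)) (fun a => iota B (f a)).

Definition eta {A B : Type} (f : A -> B) (a : A) :
  Imf f (iota A a) == iota B (f a) :=
  happly (eq_sec_h _ (elim A (fun _ => B)) (fun a => iota B (f a))) a.

Definition Disk {A : Type} (a : A) : Type := { x : A & iota A x == iota A a }.

Definition dif {A B : Type} (f : A -> B) (a : A) : Disk a -> Disk (f a) :=
  fun p => existT _ (f (projT1 p))
    (concat (concat (inv (eta f (projT1 p))) (ap (Imf f) (projT2 p))) (eta f a)).

End Modality.

(* Main.v *)
Require Import Defs.

Definition toP {A} {x y : A} (e : x = y) : x == y :=
  match e with eq_refl => idpath end.

Definition transport {A} (P : A -> Type) {x y : A} (p : x == y) (u : P x) : P y :=
  match p with idpath => u end.

Lemma c1p {A}{x y:A}(p:x==y) : concat idpath p = p.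
Proof. destruct p; reflexivity. Qed.
Lemma cassoc {A}{x y z w:A}(p:x==y)(q:y==z)(r:z==w):
  concat p (concat q r) = concat (concat p q) r.
Proof. destruct r; reflexivity. Qed.
Lemma cpV {A}{x y:A}(p:x==y) : concat p (inv p) = idpath.
Proof. destruct p; reflexivity. Qed.
Lemma cVp {A}{x y:A}(p:x==y) : concat (inv p) p = idpath.
Proof. destruct p; reflexivity. Qed.
Lemma ap_concat {A B}(f:A->B){x y z:A}(p:x==y)(q:y==z) :
  ap f (concat p q) = concat (ap f p) (ap f q).
Proof. destruct q; reflexivity. Qed.
Lemma ap_inv {A B}(f:A->B){x y:A}(p:x==y) : ap f (inv p) = inv (ap f p).
Proof. destruct p; reflexivity. Qed.
Lemma ap_compose {A B C}(f:A->B)(g:B->C){x y:A}(p:x==y) :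
  ap (fun x => g (f x)) p = ap g (ap f p).
Proof. destruct p; reflexivity. Qed.
Lemma ap_id {A}{x y:A}(p:x==y) : ap (fun x => x) p = p.
Proof. destruct p; reflexivity. Qed.
Lemma natural {A B}{f g : A -> B}(H: forall a, f a == g a){x y}(p : x==y) :
  concat (ap f p) (H y) = concat (H x) (ap g p).
Proof. destruct p; simpl; rewrite c1p; reflexivity. Qed.
Lemma lcancel {A}{x y z:A}(p:x==y)(q r:y==z) : concat p q = concat p r -> q = r.
Proof.
  intro E. apply (f_equal (concat (inv p))) in E.
  rewrite !cassoc, !cVp, !c1p in E. exact E.
Qed.
Lemma rcancel {A}{x y z:A}(p:y==z)(q r:x==y) : concat q p = concat r p -> q = r.
Proof.
  intro E. apply (f_equal (fun t => concat t (inv p))) in E.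
  rewrite <- !cassoc, !cpV in E. exact E.
Qed.
Lemma moveL {A}{x y z:A}(p:x==y)(q:x==z)(r:y==z) : concat (inv p) q = r -> r = concat (inv p) q.
Proof. intros E; symmetry; exact E. Qed.
Lemma moveL' {A}{x y z:A}(p:y==x)(q:y==z)(r:x==z) : concat p r = q -> r = concat (inv p) q.
Proof. intros <-. rewrite cassoc, cVp, c1p. reflexivity. Qed.
Lemma homot_self {A}(h:A->A)(r:forall a, h a == a)(a:A) : r (h a) = ap h (r a).
Proof.
  pose proof (natural r (r a)) as E. rewrite ap_id in E.
  symmetry. exact (rcancel _ _ _ E).
Qed.

Record QInv {A B} (f : A -> B) : Type := {
  qg : B -> A; qs : forall b, f (qg b) == b; qr : forall a, qg (f a) == a }.
Arguments qg {A B f}. Arguments qs {A B f}. Arguments qr {A B f}.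

Definition qinv_isequiv {A B} (f : A -> B) (Q : QInv f) : IsEquiv f :=
  Build_IsEquiv _ _ f (qg Q) (qs Q) (qg Q) (qr Q).

Definition isequiv_qinv {A B} (f : A -> B) (E : IsEquiv f) : QInv f.
Proof.
  refine (Build_QInv _ _ f (eq_sec _ E) (eq_sec_h _ E) _).
  intro a.
  exact (concat (concat (inv (eq_ret_h _ E (eq_sec _ E (f a))))
                        (ap (eq_ret _ E) (eq_sec_h _ E (f a)))) (eq_ret_h _ E a)).
Defined.

Definition qcompose {A B C} (f : A -> B) (g : B -> C) (F : QInv f) (G : QInv g) :
  QInv (fun a => g (f a)).
Proof.
  refine (Build_QInv _ _ _ (fun c => qg F (qg G c)) _ _).
  - intro c. exact (concat (ap g (qs F (qg G c))) (qs G c)).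
  - intro a. exact (concat (ap (qg F) (qr G (f a))) (qr F a)).
Defined.

(* half adjoint *)
Definition hs {A B} {f : A -> B} (Q : QInv f) (b : B) : f (qg Q b) == b :=
  concat (inv (qs Q (f (qg Q b)))) (concat (ap f (qr Q (qg Q b))) (qs Q b)).

Lemma hadj {A B} {f : A -> B} (Q : QInv f) (a : A) : ap f (qr Q a) = hs Q (f a).
Proof.
  unfold hs. apply moveL'.
  rewrite (homot_self (fun a => qg Q (f a)) (qr Q) a).
  rewrite <- (ap_compose (fun a => qg Q (f a)) f).
  rewrite (ap_compose f (fun b => f (qg Q b))).
  rewrite (natural (qs Q) (ap f (qr Q a))). rewrite ap_id. reflexivity.
Qed.

Lemma transport_pV {A}(P:A->Type){x y:A}(p:x==y)(u:P y) :
  transport P p (transport P (inv p) u) = u.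
Proof. destruct p; reflexivity. Qed.
Lemma transport_compose {A B}(f:A->B)(P:B->Type){x y:A}(p:x==y)(u:P (f x)) :
  transport (fun a => P (f a)) p u = transport P (ap f p) u.
Proof. destruct p; reflexivity. Qed.
Lemma path_sigma {A}(P:A->Type){u1 u2:A}(p:u1==u2)(v1:P u1)(v2:P u2) :
  transport P p v1 = v2 -> existT P u1 v1 = existT P u2 v2.
Proof. destruct p; simpl; intros ->; reflexivity. Qed.

Definition reindex {A B} (f : A -> B) (P : B -> Type) :
  {a : A & P (f a)} -> {b : B & P b} :=
  fun u => existT P (f (projT1 u)) (projT2 u).

Definition qreindex {A B} (f : A -> B) (P : B -> Type) (Q : QInv f) :
  QInv (reindex f P).
Proof.
  refine (Build_QInv _ _ _
    (fun w => existT (fun a => P (f a)) (qg Q (projT1 w))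
                (transport P (inv (hs Q (projT1 w))) (projT2 w))) _ _).
  - intros [b q]. apply toP. unfold reindex; simpl.
    apply (path_sigma P (hs Q b)). apply transport_pV.
  - intros [a q]. apply toP. unfold reindex; simpl.
    apply (path_sigma (fun a => P (f a)) (qr Q a)).
    rewrite transport_compose, hadj. apply transport_pV.
Defined.

Definition total {A} {P Q : A -> Type} (phi : forall a, P a -> Q a) :
  {a : A & P a} -> {a : A & Q a} :=
  fun u => existT Q (projT1 u) (phi (projT1 u) (projT2 u)).

Definition qtotal {A} {P Q : A -> Type} (phi : forall a, P a -> Q a)
  (H : forall a, QInv (phi a)) : QInv (total phi).
Proof.
  refine (Build_QInv _ _ _
    (fun w => existT P (projT1 w) (qg (H (projT1 w)) (projT2 w))) _ _).
  - intros [a q]. unfold total; simpl. exact (ap (existT Q a) (qs (H a) q)).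
  - intros [a q]. unfold total; simpl. exact (ap (existT P a) (qr (H a) q)).
Defined.

Definition qap {X Y} (F : X -> Y) (Q : QInv F) (u v : X) :
  QInv (fun p : u == v => ap F p).
Proof.
  refine (Build_QInv _ _ _
    (fun q => concat (inv (qr Q u)) (concat (ap (qg Q) q) (qr Q v))) _ _).
  - intro q. apply toP.
    rewrite !ap_concat, ap_inv, !hadj.
    rewrite <- (ap_compose (qg Q) F).
    rewrite (natural (hs Q) q), ap_id, cassoc, cVp, c1p. reflexivity.
  - intro p. apply toP. destruct p. simpl. rewrite c1p, cVp. reflexivity.
Defined.

Definition qconcatl {A} {x y z : A} (e : x == y) : QInv (fun q : y == z => concat e q).
Proof.
  refine (Build_QInv _ _ _ (fun q => concat (inv e) q) _ _).
  - intro q. apply toP. rewrite cassoc, cpV, c1p. reflexivity.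
  - intro q. apply toP. rewrite cassoc, cVp, c1p. reflexivity.
Defined.

Definition qconcatr {A} {x y z : A} (e : y == z) : QInv (fun q : x == y => concat q e).
Proof.
  refine (Build_QInv _ _ _ (fun q => concat q (inv e)) _ _).
  - intro q. apply toP. rewrite <- cassoc, cVp. reflexivity.
  - intro q. apply toP. rewrite <- cassoc, cpV. reflexivity.
Defined.

Section Main.
Variables (fe : Funext) (Im : Type -> Type) (iota : forall A : Type, A -> Im A)
  (elim : ModalElim Im iota).

Definition funext_p {A} {B : A -> Type} (f g : forall a, B a) :
  (forall a, f a == g a) -> f == g := eq_sec _ (fe A B f g).

Definition Im_unique {A C : Type} (h k : Im A -> Im C)
  (H : forall a, h (iota A a) == k (iota A a)) : forall z, h z == k z.
Proof.
  set (E := elim A (fun _ => C)).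
  assert (p : precomp Im iota A (fun _ => C) h == precomp Im iota A (fun _ => C) k)
    by (apply funext_p; exact H).
  apply happly.
  exact (concat (concat (inv (eq_ret_h _ E h)) (ap (eq_ret _ E) p)) (eq_ret_h _ E k)).
Defined.

Definition Imf_sec {A B} (f : A -> B) (g : B -> A) (s : forall b, f (g b) == b) :
  forall z, Imf Im iota elim f (Imf Im iota elim g z) == z.
Proof.
  apply (Im_unique (fun z => Imf Im iota elim f (Imf Im iota elim g z)) (fun z => z)).
  intro b.
  exact (concat (concat (ap (Imf Im iota elim f) (eta Im iota elim g b))
                        (eta Im iota elim f (g b))) (ap (iota B) (s b))).
Defined.

Definition qImf {A B} (f : A -> B) (Q : QInv f) : QInv (Imf Im iota elim f) :=
  Build_QInv _ _ _ (Imf Im iota elim (qg Q)) (Imf_sec f (qg Q) (qs Q))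
    (Imf_sec (qg Q) f (qr Q)).

Definition phi {A B} (f : A -> B) (x : A) (x' : A)
  (e : iota A x' == iota A x) : iota B (f x') == iota B (f x) :=
  concat (concat (inv (eta Im iota elim f x')) (ap (Imf Im iota elim f) e))
         (eta Im iota elim f x).

Definition qphi {A B} (f : A -> B) (Q : QInv f) (x x' : A) : QInv (phi f x x').
Proof.
  unfold phi.
  refine (qcompose (fun e => concat (inv (eta Im iota elim f x')) (ap (Imf Im iota elim f) e))
                   (fun q => concat q (eta Im iota elim f x)) _ (qconcatr _)).
  refine (qcompose (fun e : iota A x' == iota A x => ap (Imf Im iota elim f) e)
                   (fun q => concat (inv (eta Im iota elim f x')) q) _ (qconcatl _)).
  apply qap. apply qImf. exact Q.
Defined.

Lemma part_a : forall (A B : Type) (f : A -> B), IsEquiv f ->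
     forall x : A, IsEquiv (dif Im iota elim f x).
Proof.
  intros A B f Hf x.
  pose (Q := isequiv_qinv f Hf).
  apply qinv_isequiv.
  exact (qcompose (total (phi f x)) (reindex f (fun b => iota B b == iota B (f x)))
           (qtotal (phi f x) (qphi f Q x))
           (qreindex f (fun b => iota B b == iota B (f x)) Q)).
Qed.

End Main.

Theorem lemma3p10
  (fe : Funext)
  (Im : Type -> Type) (iota : forall A : Type, A -> Im A)
  (elim : ModalElim Im iota) :
  (forall (A B : Type) (f : A -> B), IsEquiv f ->
     forall x : A, IsEquiv (dif Im iota elim f x))
  * (forall (A : Type) (x y : A), x == y ->
       Equiv (Disk Im iota x) (Disk Im iota y)).
Proof.
  split.
  - exact (part_a fe Im iota elim).
  - intros A x y p. destruct p.
    exists (fun d => d).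
    exact (Build_IsEquiv _ _ _ (fun d => d) (fun d => idpath) (fun d => d) (fun d => idpath)).
Qed.
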